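(* Let $M$ be a simply-connected domain in the Minkowski plane $(\mathbb{R}^2(u,v),du\,dv)$ and $\omega,Q,R:M\to\mathbb{R}$ smooth. (1) If $\Phi=(\Phi_1,\Phi_2):M\to\mathrm{SL}_2\mathbb{R}\times\mathrm{SL}_2\mathbb{R}$ satisfies $(\Phi_i)_u=\Phi_i\mathcal U_i$, $(\Phi_i)_v=\Phi_i\mathcal V_i$ ($i=1,2$) with $$\mathcal U_1=\begin{pmatrix}\frac{\omega_u}{4}&e^{\omega/2}\\-e^{-\omega/2}Q&-\frac{\omega_u}{4}\end{pmatrix},\ \mathcal V_1=\begin{pmatrix}-\frac{\omega_v}{4}&e^{-\omega/2}R\\0&\frac{\omega_v}{4}\end{pmatrix},\ \mathcal U_2=\begin{pmatrix}-\frac{\omega_u}{4}&e^{-\omega/2}Q\\0&\frac{\omega_u}{4}\end{pmatrix},\ \mathcal V_2=\begin{pmatrix}\frac{\omega_v}{4}&e^{\omega/2}\\-e^{-\omega/2}R&-\frac{\omega_v}{4}\end{pmatrix},$$ then $\varphi=\Phi_1\Phi_2^t:M\to\mathbb{H}^3_1(-1)$ is a conformal timelike immersion of constant mean curvature $1$. (2) If $\Psi=(\Psi_1,\Psi_2):M\to\mathrm{SL}_2\mathbb{R}\times\mathrm{SL}_2\mathbb{R}$ satisfies $(\Psi_1)_u=\Psi_1\mathcal U_1$, $(\Psi_1)_v=\Psi_1\mathcal V_1$ (as in (1)) and $(\Psi_2)_u=\Psi_2\begin{pmatrix}\frac{\omega_u}{4}&0\\-e^{-\omega/2}Q&-\frac{\omega_u}{4}\end{pmatrix}$,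 $(\Psi_2)_v=\Psi_2\begin{pmatrix}-\frac{\omega_v}{4}&e^{-\omega/2}R\\-e^{\omega/2}&\frac{\omega_v}{4}\end{pmatrix}$, then $\psi=\Psi_1\Psi_2^{-1}:M\to\mathbb{H}^3_1(-1)$ is a conformal timelike immersion of constant mean curvature $1$.
   Context: $\mathbb{E}^4_2$ (metric $-(dx_0)^2-(dx_1)^2+(dx_2)^2+(dx_3)^2$) is identified with $M_2(\mathbb{R})$ via $(x_0,x_1,x_2,x_3)\mapsto \begin{pmatrix}x_0+x_3& x_1+x_2\\ -x_1+x_2 & x_0-x_3\end{pmatrix}$, with $\langle u,v\rangle=\tfrac12\{\operatorname{tr}(uv)-\operatorname{tr}u\operatorname{tr}v\}$; then $\mathbb{H}^3_1(-1)=\{\langle x,x\rangle=-1\}=\mathrm{SL}_2\mathbb{R}$. Conformal timelike with null coordinates $(u,v)$: $\langle\varphi_u,\varphi_u\rangle=\langle\varphi_v,\varphi_v\rangle=0$, $\langle\varphi_u,\varphi_v\rangle=\tfrac12e^\omega$. Mean curvature with respect to the unit normal $N=\Phi_1\mathbf k'\Phi_2^t$ (resp. $\Psi_1\mathbf k'\Psi_2^{-1}$), $\mathbf k'=\mathrm{diag}(1,-1)$, is $H=2e^{-\omega}\langle\varphi_{uv},N\rangle$. *)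

(* Defs.v *)
From Stdlib Require Import Reals List.
From Coquelicot Require Import Coquelicot.
Open Scope R_scope.

Definition pt := (R * R)%type.

Definition pu (f : pt -> R) : pt -> R :=
  fun p => Derive (fun t => f (t, snd p)) (fst p).
Definition pv (f : pt -> R) : pt -> R :=
  fun p => Derive (fun t => f (fst p, t)) (snd p).

(** Iterated partial derivative along a word of directions (true = u, false = v). *)
Fixpoint dword (w : list bool) (f : pt -> R) : pt -> R :=
  match w with
  | nil => f
  | b :: w' => (if b then pu else pv) (dword w' f)
  end.

Definition smooth_on (M : pt -> Prop) (f : pt -> R) : Prop :=
  forall (w : list bool) (p : pt), M p ->
    continuous (dword w f) p /\
    ex_derive (fun t => dword w f (t, snd p)) (fst p) /\
    ex_derive (fun t => dword w f (fst p, t)) (snd p).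

Definition in01 (t : R) : Prop := 0 <= t <= 1.

Definition path_connected (M : pt -> Prop) : Prop :=
  forall p q, M p -> M q ->
    exists g : R -> pt, (forall t, continuous g t) /\
      (forall t, in01 t -> M (g t)) /\ g 0 = p /\ g 1 = q.

Definition loops_contractible (M : pt -> Prop) : Prop :=
  forall g : R -> pt, (forall t, continuous g t) ->
    (forall t, in01 t -> M (g t)) -> g 0 = g 1 ->
    exists (H : pt -> pt) (p0 : pt),
      (forall x, continuous H x) /\
      (forall s t, in01 s -> in01 t -> M (H (s, t))) /\
      (forall s, H (s, 0) = g s) /\
      (forall s, H (s, 1) = p0) /\
      (forall t, H (0, t) = H (1, t)).

Definition simply_connected_domain (M : pt -> Prop) : Prop :=
  open M /\ (exists p, M p) /\ path_connected M /\ loops_contractible M.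

(** * 2x2 real matrices, identified with E^4_2 as in the paper. *)
Record mat2 := Mat2 { m11 : R; m12 : R; m21 : R; m22 : R }.

Definition mmul (A B : mat2) : mat2 :=
  Mat2 (m11 A * m11 B + m12 A * m21 B) (m11 A * m12 B + m12 A * m22 B)
       (m21 A * m11 B + m22 A * m21 B) (m21 A * m12 B + m22 A * m22 B).
Definition mtr (A : mat2) : mat2 := Mat2 (m11 A) (m21 A) (m12 A) (m22 A).
Definition mdet (A : mat2) : R := m11 A * m22 A - m12 A * m21 A.
Definition mtrace (A : mat2) : R := m11 A + m22 A.
Definition minv (A : mat2) : mat2 :=
  Mat2 (m22 A / mdet A) (- m12 A / mdet A) (- m21 A / mdet A) (m11 A / mdet A).
Definition madd (A B : mat2) : mat2 :=
  Mat2 (m11 A + m11 B) (m12 A + m12 B) (m21 A + m21 B) (m22 A + m22 B).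
Definition mscal (a : R) (A : mat2) : mat2 :=
  Mat2 (a * m11 A) (a * m12 A) (a * m21 A) (a * m22 A).
Definition mzero : mat2 := Mat2 0 0 0 0.

(** <u,v> = 1/2 { tr(uv) - tr u tr v }  (metric of E^4_2). *)
Definition ip (A B : mat2) : R :=
  / 2 * (mtrace (mmul A B) - mtrace A * mtrace B).

Definition kp : mat2 := Mat2 1 0 0 (-1).

Definition in_H31 (A : mat2) : Prop := ip A A = -1.

Definition mpu (F : pt -> mat2) : pt -> mat2 := fun p =>
  Mat2 (pu (fun q => m11 (F q)) p) (pu (fun q => m12 (F q)) p)
       (pu (fun q => m21 (F q)) p) (pu (fun q => m22 (F q)) p).
Definition mpv (F : pt -> mat2) : pt -> mat2 := fun p =>
  Mat2 (pv (fun q => m11 (F q)) p) (pv (fun q => m12 (F q)) p)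
       (pv (fun q => m21 (F q)) p) (pv (fun q => m22 (F q)) p).

Definition msmooth_on (M : pt -> Prop) (F : pt -> mat2) : Prop :=
  smooth_on M (fun q => m11 (F q)) /\ smooth_on M (fun q => m12 (F q)) /\
  smooth_on M (fun q => m21 (F q)) /\ smooth_on M (fun q => m22 (F q)).

Definition has_pu (M : pt -> Prop) (F G : pt -> mat2) : Prop :=
  forall p, M p ->
    is_derive (fun t => m11 (F (t, snd p))) (fst p) (m11 (G p)) /\
    is_derive (fun t => m12 (F (t, snd p))) (fst p) (m12 (G p)) /\
    is_derive (fun t => m21 (F (t, snd p))) (fst p) (m21 (G p)) /\
    is_derive (fun t => m22 (F (t, snd p))) (fst p) (m22 (G p)).
Definition has_pv (M : pt -> Prop) (F G : pt -> mat2) : Prop :=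
  forall p, M p ->
    is_derive (fun t => m11 (F (fst p, t))) (snd p) (m11 (G p)) /\
    is_derive (fun t => m12 (F (fst p, t))) (snd p) (m12 (G p)) /\
    is_derive (fun t => m21 (F (fst p, t))) (snd p) (m21 (G p)) /\
    is_derive (fun t => m22 (F (fst p, t))) (snd p) (m22 (G p)).

Definition SL2_valued (M : pt -> Prop) (F : pt -> mat2) : Prop :=
  forall p, M p -> mdet (F p) = 1.

(** * Conclusion: phi : M -> H^3_1(-1) is a smooth conformal timelike immersion,
    conformal factor e^omega in the null coordinates (u,v)
    (<phi_u,phi_u> = <phi_v,phi_v> = 0, <phi_u,phi_v> = e^omega / 2),
    with mean curvature H = 2 e^{-omega} <phi_uv, N> identically equal to 1. *)
Definition cmc1_conformal_timelike_immersion (M : pt -> Prop)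
    (omega : pt -> R) (phi N : pt -> mat2) : Prop :=
  msmooth_on M phi /\
  (forall p, M p ->
     in_H31 (phi p) /\
     (forall a b : R, madd (mscal a (mpu phi p)) (mscal b (mpv phi p)) = mzero ->
        a = 0 /\ b = 0) /\
     ip (mpu phi p) (mpu phi p) = 0 /\
     ip (mpv phi p) (mpv phi p) = 0 /\
     ip (mpu phi p) (mpv phi p) = / 2 * exp (omega p) /\
     ip (mpu phi p) (mpu phi p) * ip (mpv phi p) (mpv phi p)
       - (ip (mpu phi p) (mpv phi p)) ^ 2 < 0 /\
     2 * exp (- omega p) * ip (mpv (mpu phi) p) (N p) = 1).

Definition U1 (omega Q : pt -> R) (p : pt) : mat2 :=
  Mat2 (pu omega p / 4) (exp (omega p / 2))
       (- exp (- omega p / 2) * Q p) (- (pu omega p / 4)).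
Definition V1 (omega Rf : pt -> R) (p : pt) : mat2 :=
  Mat2 (- (pv omega p / 4)) (exp (- omega p / 2) * Rf p)
       0 (pv omega p / 4).
Definition U2 (omega Q : pt -> R) (p : pt) : mat2 :=
  Mat2 (- (pu omega p / 4)) (exp (- omega p / 2) * Q p)
       0 (pu omega p / 4).
Definition V2 (omega Rf : pt -> R) (p : pt) : mat2 :=
  Mat2 (pv omega p / 4) (exp (omega p / 2))
       (- exp (- omega p / 2) * Rf p) (- (pv omega p / 4)).
Definition U2' (omega Q : pt -> R) (p : pt) : mat2 :=
  Mat2 (pu omega p / 4) 0
       (- exp (- omega p / 2) * Q p) (- (pu omega p / 4)).
Definition V2' (omega Rf : pt -> R) (p : pt) : mat2 :=
  Mat2 (- (pv omega p / 4)) (exp (- omega p / 2) * Rf p)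
       (- exp (omega p / 2)) (pv omega p / 4).

(* Main.v *)
Require Import Defs.
From Stdlib Require Import Reals Lra List FunctionalExtensionality.
From Coquelicot Require Import Coquelicot.
Open Scope R_scope.

Lemma loc_u (M : pt -> Prop) p : open M -> M p -> locally (fst p) (fun t => M (t, snd p)).
Proof.
  intros HM Hp. destruct (HM p Hp) as [eps He]. exists eps. intros t Ht.
  apply He. destruct p as [x y]. split; [exact Ht | apply ball_center].
Qed.
Lemma loc_v (M : pt -> Prop) p : open M -> M p -> locally (snd p) (fun t => M (fst p, t)).
Proof.
  intros HM Hp. destruct (HM p Hp) as [eps He]. exists eps. intros t Ht.
  apply He. destruct p as [x y]. split; [apply ball_center | exact Ht].
Qed.

Lemma dword_app w w' f : dword (w ++ w') f = dword w (dword w' f).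
Proof. induction w as [|b w IH]; simpl; [reflexivity| rewrite IH; reflexivity]. Qed.

Lemma smooth_pu M f : smooth_on M f -> smooth_on M (pu f).
Proof. intros H w p Hp. rewrite <- (dword_app w (true::nil)). apply H; auto. Qed.
Lemma smooth_pv M f : smooth_on M f -> smooth_on M (pv f).
Proof. intros H w p Hp. rewrite <- (dword_app w (false::nil)). apply H; auto. Qed.

Lemma dword_opp w f : dword w (fun q => - f q) = fun q => - dword w f q.
Proof.
  induction w as [|b w IH]; simpl; [reflexivity|]. rewrite IH.
  apply functional_extensionality; intro q. destruct b; unfold pu, pv; apply Derive_opp.
Qed.

Lemma smooth_opp M f : smooth_on M f -> smooth_on M (fun q => - f q).
Proof.
  intros H w p Hp. rewrite dword_opp. destruct (H w p Hp) as [H1 [H2 H3]].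
  split; [|split].
  - apply (continuous_opp (dword w f)); auto.
  - apply (ex_derive_opp (fun t => dword w f (t, snd p))); auto.
  - apply (ex_derive_opp (fun t => dword w f (fst p, t))); auto.
Qed.

Section Gen.
Variable M : pt -> Prop.
Hypothesis HM : open M.

Inductive Gen : (pt -> R) -> Prop :=
| Gprod f g : smooth_on M f -> smooth_on M g -> Gen (fun q => f q * g q)
| Gadd h1 h2 : Gen h1 -> Gen h2 -> Gen (fun q => h1 q + h2 q)
| Gext h1 h2 : Gen h1 -> (forall q, M q -> h1 q = h2 q) -> Gen h2.

Lemma Gen_reg h : Gen h -> forall p, M p -> continuous h p /\
    ex_derive (fun t => h (t, snd p)) (fst p) /\ ex_derive (fun t => h (fst p, t)) (snd p).
Proof.
  induction 1 as [f g Hf Hg|h1 h2 _ IH1 _ IH2|h1 h2 _ IH E]; intros p Hp.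
  - destruct (Hf nil p Hp) as [a1 [a2 a3]]; destruct (Hg nil p Hp) as [b1 [b2 b3]]; simpl in *.
    split; [|split].
    + apply (continuous_mult f g); auto.
    + apply (ex_derive_mult (fun t => f (t, snd p)) (fun t => g (t, snd p))); auto.
    + apply (ex_derive_mult (fun t => f (fst p, t)) (fun t => g (fst p, t))); auto.
  - destruct (IH1 p Hp) as [a1 [a2 a3]]; destruct (IH2 p Hp) as [b1 [b2 b3]].
    split; [|split].
    + apply (continuous_plus h1 h2); auto.
    + apply (ex_derive_plus (fun t => h1 (t, snd p)) (fun t => h2 (t, snd p))); auto.
    + apply (ex_derive_plus (fun t => h1 (fst p, t)) (fun t => h2 (fst p, t))); auto.
  - destruct (IH p Hp) as [a1 [a2 a3]]. split; [|split].
    + apply (continuous_ext_loc _ h1); auto.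
      destruct (HM p Hp) as [eps He]. exists eps. intros y Hy. apply E, He, Hy.
    + apply (ex_derive_ext_loc (fun t => h1 (t, snd p))); auto.
      apply (filter_imp (fun t => M (t, snd p))); [intros; apply E; auto| apply loc_u; auto].
    + apply (ex_derive_ext_loc (fun t => h1 (fst p, t))); auto.
      apply (filter_imp (fun t => M (fst p, t))); [intros; apply E; auto| apply loc_v; auto].
Qed.

Lemma Gen_pu h : Gen h -> Gen (pu h).
Proof.
  induction 1 as [f g Hf Hg|h1 h2 G1 IH1 G2 IH2|h1 h2 G1 IH E].
  - apply (Gext (fun q => pu f q * g q + f q * pu g q)).
    + apply Gadd; apply Gprod; auto using smooth_pu.
    + intros q Hq. destruct (Hf nil q Hq) as [_ [a _]]; destruct (Hg nil q Hq) as [_ [b _]].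
      destruct q as [x y]; simpl in *. unfold pu; simpl. symmetry. apply (Derive_mult (fun t => f (t, y)) (fun t => g (t, y))); auto.
  - apply (Gext (fun q => pu h1 q + pu h2 q)).
    + apply Gadd; auto.
    + intros q Hq. destruct (Gen_reg _ G1 q Hq) as [_ [a _]]; destruct (Gen_reg _ G2 q Hq) as [_ [b _]].
      unfold pu. symmetry. apply (Derive_plus (fun t => h1 (t, snd q)) (fun t => h2 (t, snd q))); auto.
  - apply (Gext (pu h1)); auto. intros q Hq. unfold pu. apply Derive_ext_loc.
    apply (filter_imp (fun t => M (t, snd q))); [intros; apply E; auto| apply loc_u; auto].
Qed.

Lemma Gen_pv h : Gen h -> Gen (pv h).
Proof.
  induction 1 as [f g Hf Hg|h1 h2 G1 IH1 G2 IH2|h1 h2 G1 IH E].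
  - apply (Gext (fun q => pv f q * g q + f q * pv g q)).
    + apply Gadd; apply Gprod; auto using smooth_pv.
    + intros q Hq. destruct (Hf nil q Hq) as [_ [_ a]]; destruct (Hg nil q Hq) as [_ [_ b]].
      destruct q as [x y]; simpl in *. unfold pv; simpl. symmetry. apply (Derive_mult (fun t => f (x, t)) (fun t => g (x, t))); auto.
  - apply (Gext (fun q => pv h1 q + pv h2 q)).
    + apply Gadd; auto.
    + intros q Hq. destruct (Gen_reg _ G1 q Hq) as [_ [_ a]]; destruct (Gen_reg _ G2 q Hq) as [_ [_ b]].
      unfold pv. symmetry. apply (Derive_plus (fun t => h1 (fst q, t)) (fun t => h2 (fst q, t))); auto.
  - apply (Gext (pv h1)); auto. intros q Hq. unfold pv. apply Derive_ext_loc.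
    apply (filter_imp (fun t => M (fst q, t))); [intros; apply E; auto| apply loc_v; auto].
Qed.

Lemma Gen_dword w h : Gen h -> Gen (dword w h).
Proof. induction w as [|b w IH]; intro G; simpl; auto. destruct b; [apply Gen_pu|apply Gen_pv]; auto. Qed.

Lemma Gen_smooth h : Gen h -> smooth_on M h.
Proof. intros G w p Hp. apply Gen_reg; auto. apply Gen_dword; auto. Qed.

End Gen.

Lemma isd_val (f : R -> R) (x l l' : R) : is_derive f x l -> l = l' -> is_derive f x l'.
Proof. intros H E; subst; auto. Qed.

Lemma isd_mp (a b c d : R -> R) (x da db dc dd v : R) :
  is_derive a x da -> is_derive b x db -> is_derive c x dc -> is_derive d x dd ->
  v = da * b x + a x * db + (dc * d x + c x * dd) ->
  is_derive (fun t => a t * b t + c t * d t) x v.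
Proof.
  intros Ha Hb Hc Hd E. subst v.
  apply (is_derive_plus (fun t => a t * b t) (fun t => c t * d t)).
  - apply (is_derive_mult a b); auto; intros; apply Rmult_comm.
  - apply (is_derive_mult c d); auto; intros; apply Rmult_comm.
Qed.

Lemma isd_exph (g : R -> R) (x dg : R) : is_derive g x dg ->
  is_derive (fun t => exp (g t / 2)) x (exp (g x / 2) * (dg / 2)).
Proof.
  intros H. apply (isd_val _ _ (scal (dg * / 2) (exp (g x / 2)))).
  - apply (is_derive_comp exp (fun t => g t / 2)). apply is_derive_exp.
    unfold Rdiv. apply (isd_val _ _ (/2 * dg)); [|apply Rmult_comm].
    apply (is_derive_ext (fun t => / 2 * g t)); [intros; apply Rmult_comm|]. apply is_derive_scal; auto.
  - change (dg * / 2 * exp (g x / 2) = exp (g x / 2) * (dg / 2)). unfold Rdiv; ring.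
Qed.

Lemma mat2_ext (A B : mat2) : m11 A = m11 B -> m12 A = m12 B -> m21 A = m21 B -> m22 A = m22 B -> A = B.
Proof. destruct A, B; simpl; intros; subst; reflexivity. Qed.

Definition adj (A : mat2) : mat2 := Mat2 (m22 A) (- m12 A) (- m21 A) (m11 A).

Section Mat.
Variable M : pt -> Prop.
Hypothesis HM : open M.

Lemma has_pu_mul P B DP DB : has_pu M P DP -> has_pu M B DB ->
  has_pu M (fun p => mmul (P p) (B p)) (fun p => madd (mmul (DP p) (B p)) (mmul (P p) (DB p))).
Proof.
  intros HP HB p Hp. destruct (HP p Hp) as [a1 [a2 [a3 a4]]]; destruct (HB p Hp) as [b1 [b2 [b3 b4]]].
  destruct p as [x y]; simpl in *.
  split; [|split; [|split]]; [refine (isd_mp _ _ _ _ _ _ _ _ _ _ a1 b1 a2 b3 _)|refine (isd_mp _ _ _ _ _ _ _ _ _ _ a1 b2 a2 b4 _)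
   |refine (isd_mp _ _ _ _ _ _ _ _ _ _ a3 b1 a4 b3 _)|refine (isd_mp _ _ _ _ _ _ _ _ _ _ a3 b2 a4 b4 _)]; simpl; ring.
Qed.

Lemma has_pv_mul P B DP DB : has_pv M P DP -> has_pv M B DB ->
  has_pv M (fun p => mmul (P p) (B p)) (fun p => madd (mmul (DP p) (B p)) (mmul (P p) (DB p))).
Proof.
  intros HP HB p Hp. destruct (HP p Hp) as [a1 [a2 [a3 a4]]]; destruct (HB p Hp) as [b1 [b2 [b3 b4]]].
  destruct p as [x y]; simpl in *.
  split; [|split; [|split]]; [refine (isd_mp _ _ _ _ _ _ _ _ _ _ a1 b1 a2 b3 _)|refine (isd_mp _ _ _ _ _ _ _ _ _ _ a1 b2 a2 b4 _)
   |refine (isd_mp _ _ _ _ _ _ _ _ _ _ a3 b1 a4 b3 _)|refine (isd_mp _ _ _ _ _ _ _ _ _ _ a3 b2 a4 b4 _)]; simpl; ring.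
Qed.

Lemma has_pu_val F G G' : has_pu M F G -> (forall p, M p -> G p = G' p) -> has_pu M F G'.
Proof. intros H E p Hp. rewrite <- (E p Hp). auto. Qed.
Lemma has_pv_val F G G' : has_pv M F G -> (forall p, M p -> G p = G' p) -> has_pv M F G'.
Proof. intros H E p Hp. rewrite <- (E p Hp). auto. Qed.

Lemma has_pu_ext F F' G : has_pu M F G -> (forall p, M p -> F p = F' p) -> has_pu M F' G.
Proof.
  intros H E p Hp. destruct (H p Hp) as [a1 [a2 [a3 a4]]].
  assert (L : locally (fst p) (fun t => F (t, snd p) = F' (t, snd p))).
  { apply (filter_imp (fun t => M (t, snd p))); [intros; apply E; auto| apply loc_u; auto]. }
  split; [|split; [|split]]; (eapply is_derive_ext_loc; cycle 1; [eassumption|]);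
  (eapply filter_imp; [|exact L]; intros t e; cbv beta in *; first [exact (f_equal m11 e)|exact (f_equal m12 e)|exact (f_equal m21 e)|exact (f_equal m22 e)]).
Qed.
Lemma has_pv_ext F F' G : has_pv M F G -> (forall p, M p -> F p = F' p) -> has_pv M F' G.
Proof.
  intros H E p Hp. destruct (H p Hp) as [a1 [a2 [a3 a4]]].
  assert (L : locally (snd p) (fun t => F (fst p, t) = F' (fst p, t))).
  { apply (filter_imp (fun t => M (fst p, t))); [intros; apply E; auto| apply loc_v; auto]. }
  split; [|split; [|split]]; (eapply is_derive_ext_loc; cycle 1; [eassumption|]);
  (eapply filter_imp; [|exact L]; intros t e; cbv beta in *; first [exact (f_equal m11 e)|exact (f_equal m12 e)|exact (f_equal m21 e)|exact (f_equal m22 e)]).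
Qed.

Lemma mpu_eq F G p : has_pu M F G -> M p -> mpu F p = G p.
Proof.
  intros H Hp. destruct (H p Hp) as [a1 [a2 [a3 a4]]].
  apply mat2_ext; unfold mpu, pu; simpl; apply is_derive_unique; auto.
Qed.
Lemma mpv_eq F G p : has_pv M F G -> M p -> mpv F p = G p.
Proof.
  intros H Hp. destruct (H p Hp) as [a1 [a2 [a3 a4]]].
  apply mat2_ext; unfold mpv, pv; simpl; apply is_derive_unique; auto.
Qed.

Lemma msmooth_mul P B F : msmooth_on M P -> msmooth_on M B ->
  (forall p, M p -> F p = mmul (P p) (B p)) -> msmooth_on M F.
Proof.
  intros [p1 [p2 [p3 p4]]] [b1 [b2 [b3 b4]]] E.
  split; [|split; [|split]]; apply (Gen_smooth M HM); eapply Gext;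
   [apply (Gadd _ _ _ (Gprod _ _ _ p1 b1) (Gprod _ _ _ p2 b3))| |
    apply (Gadd _ _ _ (Gprod _ _ _ p1 b2) (Gprod _ _ _ p2 b4))| |
    apply (Gadd _ _ _ (Gprod _ _ _ p3 b1) (Gprod _ _ _ p4 b3))| |
    apply (Gadd _ _ _ (Gprod _ _ _ p3 b2) (Gprod _ _ _ p4 b4))| ];
   intros q Hq; cbv beta; rewrite (E q Hq); reflexivity.
Qed.
End Mat.

Definition Ae (omega : pt -> R) p := Mat2 0 (exp (omega p / 2)) 0 0.
Definition A2e (omega : pt -> R) p := Mat2 0 0 (exp (omega p / 2)) 0.
Definition Ad (omega : pt -> R) p := Mat2 0 (exp (omega p / 2) * (pv omega p / 2)) 0 0.
Definition Vt (omega Rf : pt -> R) p := Mat2 (pv omega p / 4) (- exp (- omega p / 2) * Rf p)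
   (exp (omega p / 2)) (- (pv omega p / 4)).

Lemma has_pv_A M omega : smooth_on M omega -> has_pv M (Ae omega) (Ad omega).
Proof.
  intros Hs p Hp. destruct (Hs nil p Hp) as [_ [_ h]]. simpl in h.
  apply Derive_correct in h. destruct p as [x y]. simpl in *.
  split; [|split; [|split]].
  - apply (is_derive_const (V := R_NormedModule) 0 y).
  - apply (isd_exph (fun t => omega (x, t))). exact h.
  - apply (is_derive_const (V := R_NormedModule) 0 y).
  - apply (is_derive_const (V := R_NormedModule) 0 y).
Qed.

Lemma ipinv P X Y B : ip (mmul (mmul P X) B) (mmul (mmul P Y) B) = mdet P * mdet B * ip X Y.
Proof. destruct P, X, Y, B; unfold ip, mtrace, mdet; simpl; field. Qed.
Lemma ipH P B : ip (mmul P B) (mmul P B) = - (mdet P * mdet B).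
Proof. destruct P, B; unfold ip, mtrace, mdet; simpl; field. Qed.

Lemma generic (M : pt -> Prop) (omega Rf : pt -> R) (P B Ua Ub phi N : pt -> mat2) :
 open M -> smooth_on M omega -> msmooth_on M P -> msmooth_on M B ->
 SL2_valued M P -> SL2_valued M B ->
 has_pu M P (fun p => mmul (P p) (Ua p)) -> has_pu M B (fun p => mmul (Ub p) (B p)) ->
 (forall p, M p -> madd (Ua p) (Ub p) = Ae omega p) ->
 has_pv M P (fun p => mmul (P p) (V1 omega Rf p)) ->
 has_pv M B (fun p => mmul (Vt omega Rf p) (B p)) ->
 (forall p, M p -> phi p = mmul (P p) (B p)) ->
 (forall p, M p -> N p = mmul (mmul (P p) kp) (B p)) ->
 cmc1_conformal_timelike_immersion M omega phi N.
Proof.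
  intros HM Hom HsP HsB HdP HdB HPu HBu HUab HPv HBv Ephi EN.
  split; [exact (msmooth_mul M HM P B phi HsP HsB Ephi)|].
  assert (hu : has_pu M phi (fun p => mmul (mmul (P p) (Ae omega p)) (B p))).
  { apply (has_pu_ext M HM (fun p => mmul (P p) (B p))); [|intros q Hq; symmetry; exact (Ephi q Hq)].
    eapply has_pu_val; [apply (has_pu_mul M _ _ _ _ HPu HBu)|]. intros q Hq. rewrite <- (HUab q Hq).
    apply mat2_ext; simpl; ring. }
  assert (hv : has_pv M phi (fun p => mmul (mmul (P p) (A2e omega p)) (B p))).
  { apply (has_pv_ext M HM (fun p => mmul (P p) (B p))); [|intros q Hq; symmetry; exact (Ephi q Hq)].
    eapply has_pv_val; [apply (has_pv_mul M _ _ _ _ HPv HBv)|]. intros q Hq.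
    apply mat2_ext; unfold V1, Vt, A2e; simpl; ring. }
  assert (huv : has_pv M (mpu phi) (fun p =>
     madd (mmul (madd (mmul (mmul (P p) (V1 omega Rf p)) (Ae omega p)) (mmul (P p) (Ad omega p))) (B p))
          (mmul (mmul (P p) (Ae omega p)) (mmul (Vt omega Rf p) (B p))))).
  { apply (has_pv_ext M HM (fun p => mmul (mmul (P p) (Ae omega p)) (B p))).
    - apply (has_pv_mul M); [apply (has_pv_mul M); [exact HPv|apply has_pv_A; exact Hom]|exact HBv].
    - intros q Hq. symmetry. apply (mpu_eq M _ _ q hu Hq). }
  intros p Hp.
  rewrite (mpu_eq M _ _ _ hu Hp), (mpv_eq M _ _ _ hv Hp), (mpv_eq M _ _ _ huv Hp), (Ephi p Hp), (EN p Hp).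
  pose proof (HdP p Hp) as dP. pose proof (HdB p Hp) as dB.
  assert (e2 : exp (omega p / 2) * exp (omega p / 2) = exp (omega p)).
  { rewrite <- exp_plus. f_equal. field. }
  assert (en : exp (- omega p) * exp (omega p) = 1).
  { rewrite <- exp_plus. replace (- omega p + omega p) with 0 by ring. apply exp_0. }
  pose proof (exp_pos (omega p / 2)) as epos.
  assert (I1 : ip (mmul (mmul (P p) (Ae omega p)) (B p)) (mmul (mmul (P p) (Ae omega p)) (B p)) = 0).
  { rewrite ipinv. unfold ip, mtrace, Ae; simpl; ring. }
  assert (I2 : ip (mmul (mmul (P p) (A2e omega p)) (B p)) (mmul (mmul (P p) (A2e omega p)) (B p)) = 0).
  { rewrite ipinv. unfold ip, mtrace, A2e; simpl; ring. }
  assert (I3 : ip (mmul (mmul (P p) (Ae omega p)) (B p)) (mmul (mmul (P p) (A2e omega p)) (B p)) = / 2 * exp (omega p)).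
  { rewrite ipinv, dP, dB, <- e2. unfold ip, mtrace, Ae, A2e; simpl; field. }
  rewrite I1, I2, I3.
  split; [|split; [|split; [|split; [|split; [|split]]]]].
  - unfold in_H31. rewrite ipH, dP, dB. ring.
  - intros a b Hab.
    assert (h12 : m12 (mmul (mmul (adj (P p)) (madd (mscal a (mmul (mmul (P p) (Ae omega p)) (B p)))
        (mscal b (mmul (mmul (P p) (A2e omega p)) (B p))))) (adj (B p)))
        = a * exp (omega p / 2) * mdet (P p) * mdet (B p)).
    { unfold adj, mdet, Ae, A2e; simpl; ring. }
    assert (h21 : m21 (mmul (mmul (adj (P p)) (madd (mscal a (mmul (mmul (P p) (Ae omega p)) (B p)))
        (mscal b (mmul (mmul (P p) (A2e omega p)) (B p))))) (adj (B p)))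
        = b * exp (omega p / 2) * mdet (P p) * mdet (B p)).
    { unfold adj, mdet, Ae, A2e; simpl; ring. }
    rewrite Hab, dP, dB in h12. rewrite Hab, dP, dB in h21. simpl in h12, h21.
    split; nra.
  - reflexivity.
  - reflexivity.
  - reflexivity.
  - pose proof (exp_pos (omega p)). nra.
  - replace (madd (mmul (madd (mmul (mmul (P p) (V1 omega Rf p)) (Ae omega p)) (mmul (P p) (Ad omega p))) (B p))
          (mmul (mmul (P p) (Ae omega p)) (mmul (Vt omega Rf p) (B p))))
      with (mmul (mmul (P p) (madd (madd (mmul (V1 omega Rf p) (Ae omega p)) (Ad omega p))
               (mmul (Ae omega p) (Vt omega Rf p)))) (B p))
      by (apply mat2_ext; simpl; ring).
    rewrite ipinv, dP, dB.
    assert (K : ip (madd (madd (mmul (V1 omega Rf p) (Ae omega p)) (Ad omega p))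
               (mmul (Ae omega p) (Vt omega Rf p))) kp = exp (omega p) / 2).
    { rewrite <- e2. unfold ip, mtrace, V1, Ae, Ad, Vt, kp; simpl; field. }
    rewrite K. transitivity (exp (- omega p) * exp (omega p)); [field | exact en].
Qed.

Lemma has_pu_tr M F G : has_pu M F (fun p => mmul (F p) (G p)) ->
  has_pu M (fun p => mtr (F p)) (fun p => mmul (mtr (G p)) (mtr (F p))).
Proof.
  intros H p Hp. destruct (H p Hp) as [a1 [a2 [a3 a4]]]. simpl in *.
  split; [|split; [|split]]; simpl;
  [refine (isd_val _ _ _ _ a1 _)|refine (isd_val _ _ _ _ a3 _)|refine (isd_val _ _ _ _ a2 _)|refine (isd_val _ _ _ _ a4 _)];
  simpl; ring.
Qed.
Lemma has_pv_tr M F G : has_pv M F (fun p => mmul (F p) (G p)) ->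
  has_pv M (fun p => mtr (F p)) (fun p => mmul (mtr (G p)) (mtr (F p))).
Proof.
  intros H p Hp. destruct (H p Hp) as [a1 [a2 [a3 a4]]]. simpl in *.
  split; [|split; [|split]]; simpl;
  [refine (isd_val _ _ _ _ a1 _)|refine (isd_val _ _ _ _ a3 _)|refine (isd_val _ _ _ _ a2 _)|refine (isd_val _ _ _ _ a4 _)];
  simpl; ring.
Qed.
Lemma has_pu_adj M F G : has_pu M F (fun p => mmul (F p) (G p)) ->
  has_pu M (fun p => adj (F p)) (fun p => mmul (adj (G p)) (adj (F p))).
Proof.
  intros H p Hp. destruct (H p Hp) as [a1 [a2 [a3 a4]]]. simpl in *.
  split; [|split; [|split]]; simpl;
  [refine (isd_val _ _ _ _ a4 _)|refine (isd_val _ _ _ _ (is_derive_opp _ _ _ a2) _)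
  |refine (isd_val _ _ _ _ (is_derive_opp _ _ _ a3) _)|refine (isd_val _ _ _ _ a1 _)];
  simpl; unfold opp; simpl; ring.
Qed.
Lemma has_pv_adj M F G : has_pv M F (fun p => mmul (F p) (G p)) ->
  has_pv M (fun p => adj (F p)) (fun p => mmul (adj (G p)) (adj (F p))).
Proof.
  intros H p Hp. destruct (H p Hp) as [a1 [a2 [a3 a4]]]. simpl in *.
  split; [|split; [|split]]; simpl;
  [refine (isd_val _ _ _ _ a4 _)|refine (isd_val _ _ _ _ (is_derive_opp _ _ _ a2) _)
  |refine (isd_val _ _ _ _ (is_derive_opp _ _ _ a3) _)|refine (isd_val _ _ _ _ a1 _)];
  simpl; unfold opp; simpl; ring.
Qed.

Theorem corollary5p2 :
  forall (M : pt -> Prop) (omega Q Rf : pt -> R),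
    simply_connected_domain M ->
    smooth_on M omega -> smooth_on M Q -> smooth_on M Rf ->
    (* (1) *)
    (forall Phi1 Phi2 : pt -> mat2,
       msmooth_on M Phi1 -> msmooth_on M Phi2 ->
       SL2_valued M Phi1 -> SL2_valued M Phi2 ->
       has_pu M Phi1 (fun p => mmul (Phi1 p) (U1 omega Q p)) ->
       has_pv M Phi1 (fun p => mmul (Phi1 p) (V1 omega Rf p)) ->
       has_pu M Phi2 (fun p => mmul (Phi2 p) (U2 omega Q p)) ->
       has_pv M Phi2 (fun p => mmul (Phi2 p) (V2 omega Rf p)) ->
       cmc1_conformal_timelike_immersion M omega
         (fun p => mmul (Phi1 p) (mtr (Phi2 p)))
         (fun p => mmul (mmul (Phi1 p) kp) (mtr (Phi2 p)))) /\
    (* (2) *)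
    (forall Psi1 Psi2 : pt -> mat2,
       msmooth_on M Psi1 -> msmooth_on M Psi2 ->
       SL2_valued M Psi1 -> SL2_valued M Psi2 ->
       has_pu M Psi1 (fun p => mmul (Psi1 p) (U1 omega Q p)) ->
       has_pv M Psi1 (fun p => mmul (Psi1 p) (V1 omega Rf p)) ->
       has_pu M Psi2 (fun p => mmul (Psi2 p) (U2' omega Q p)) ->
       has_pv M Psi2 (fun p => mmul (Psi2 p) (V2' omega Rf p)) ->
       cmc1_conformal_timelike_immersion M omega
         (fun p => mmul (Psi1 p) (minv (Psi2 p)))
         (fun p => mmul (mmul (Psi1 p) kp) (minv (Psi2 p)))).
Proof.
  intros M omega Q Rf [HM _] Hom _ _. split.
  - intros P1 P2 s1 [b1 [b2 [b3 b4]]] d1 d2 u1 v1 u2 v2.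
    apply (generic M omega Rf P1 (fun p => mtr (P2 p)) (U1 omega Q) (fun p => mtr (U2 omega Q p))); auto.
    + split; [|split; [|split]]; assumption.
    + intros p Hp. unfold mdet; simpl. rewrite <- (d2 p Hp). unfold mdet; ring.
    + apply has_pu_tr; auto.
    + intros p Hp. apply mat2_ext; unfold U1, U2, Ae; simpl; ring.
    + eapply has_pv_val; [apply has_pv_tr; exact v2|]. intros p Hp.
      apply mat2_ext; unfold V2, Vt; simpl; ring.
  - intros P1 P2 s1 [b1 [b2 [b3 b4]]] d1 d2 u1 v1 u2 v2.
    assert (Einv : forall p, M p -> minv (P2 p) = adj (P2 p)).
    { intros p Hp. pose proof (d2 p Hp) as d. unfold minv, adj. rewrite d.
      apply mat2_ext; simpl; field. }
    apply (generic M omega Rf P1 (fun p => adj (P2 p)) (U1 omega Q) (fun p => adj (U2' omega Q p))); auto.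
    + split; [|split; [|split]]; simpl; try assumption; apply smooth_opp; assumption.
    + intros p Hp. unfold mdet; simpl. rewrite <- (d2 p Hp). unfold mdet; ring.
    + apply has_pu_adj; auto.
    + intros p Hp. apply mat2_ext; unfold U1, U2', Ae; simpl; ring.
    + eapply has_pv_val; [apply has_pv_adj; exact v2|]. intros p Hp.
      apply mat2_ext; unfold V2', Vt; simpl; ring.
    + intros p Hp. rewrite Einv; auto.
    + intros p Hp. rewrite Einv; auto.
Qed.
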